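(* Let $\mathcal A_1,\mathcal B_1:U_1\to V_1$ be linear maps of finite-dimensional vector spaces over a field $\mathbb F$. Let $U_2=\mathcal A_1^{-1}(\operatorname{im}\mathcal B_1)$, $V_2=\operatorname{im}\mathcal B_1$, and let $\mathcal A_2,\mathcal B_2:U_2\to V_2$ be the restrictions of $\mathcal A_1,\mathcal B_1$. Similarly let $U_3=\mathcal A_2^{-1}(\operatorname{im}\mathcal B_2)$, $V_3=\operatorname{im}\mathcal B_2$. Let $(A_1,B_1)$ and $(A_2,B_2)$ be the matrix pairs of $(\mathcal A_1,\mathcal B_1)$ and $(\mathcal A_2,\mathcal B_2)$ in arbitrary bases, and take any regularizing decomposition of $(A_1,B_1)$. Then a regularizing decomposition of $(A_2,B_2)$ is obtained from it by: deleting all summands $(L_1^T,R_1^T)=(0_{10},0_{10})$ and all summands $(I_1,J_1(0))=([1],[0])$; replacing each summand $(L_k^T,R_k^T)$ with $k\ge2$ by $(L_{k-1}^T,R_{k-1}^T)$ and each summand $(I_k,J_k(0))$ with $k\ge2$ by $(I_{k-1},J_{k-1}(0))$; and leaving all other summands (the regular part $(I_r,D)$ and the summands $(J_k(0),I_k)$, $(L_k,R_k)$) unchanged. Moreover, the number of summands $(L_1^T,R_1^T)$ in the decomposition of $(A_1,B_1)$ equals $(\dim V_1-\dim V_2)-(\dim U_1-\dim U_2)$, and the number of summands $(I_1,J_1(0))$ equals $(\dim U_1-\dim U_2)-(\dim V_2-\dim V_3)$.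
   Context: $J_k(0)$ denotes the $k\times k$ nilpotent Jordan block with ones directly below the diagonal. $L_k$ and $R_k$ are the $(k-1)\times k$ matrices obtained from $I_k$ by deleting its last row, respectively its first row ($L_1=R_1$ is the $0\times1$ matrix, $L_1^T=R_1^T=0_{10}$ the $1\times 0$ matrix). Direct sums of matrix pairs are blockwise. Two matrix pairs $(A,B)$, $(A',B')$ are equivalent if $SA=A'R$, $SB=B'R$ for nonsingular $S,R$. A regularizing decomposition of a matrix pair $(A,B)$ is a direct sum $(I_r,D)\oplus(M_1,N_1)\oplus\dots\oplus(M_t,N_t)$ equivalent to $(A,B)$, in which $D$ is $r\times r$ nonsingular and each $(M_i,N_i)$ is one of $(I_k,J_k(0))$, $(J_k(0),I_k)$, $(L_k,R_k)$, $(L_k^T,R_k^T)$, $k\ge1$. *)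

(* Defs.v *)
From HB Require Import structures.
From mathcomp Require Import all_boot all_order all_algebra.
Set Implicit Arguments. Unset Strict Implicit. Unset Printing Implicit Defensive.
Import Order.TTheory GRing.Theory Num.Theory.
Local Open Scope ring_scope.

(* Convention: a matrix A : 'M_(m, n) represents a linear map F^n -> F^m
   acting on column vectors x : 'cV_n by x |-> A *m x (as in the paper). *)

Section Blocks.
Variable F : fieldType.

Definition Jmx (k : nat) : 'M[F]_k := \matrix_(i, j) ((i : nat) == j.+1)%:R.
Definition Lmx (k : nat) : 'M[F]_(k.-1, k) := \matrix_(i, j) ((i : nat) == j)%:R.
Definition Rmx (k : nat) : 'M[F]_(k.-1, k) := \matrix_(i, j) ((i : nat).+1 == j)%:R.

(* Descriptors of the singular summands of a regularizing decomposition *)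
Inductive blk : Type :=
  | BIJ of nat
  | BJI of nat
  | BLR of nat
  | BLRT of nat.

Definition blk_size (b : blk) : nat :=
  match b with BIJ k | BJI k | BLR k | BLRT k => k end.

Definition brows (b : blk) : nat :=
  match b with BIJ k => k | BJI k => k | BLR k => k.-1 | BLRT k => k end.
Definition bcols (b : blk) : nat :=
  match b with BIJ k => k | BJI k => k | BLR k => k | BLRT k => k.-1 end.

Definition blkA (b : blk) : 'M[F]_(brows b, bcols b) :=
  match b return 'M[F]_(brows b, bcols b) with
  | BIJ k => 1%:M | BJI k => Jmx k | BLR k => Lmx k | BLRT k => (Lmx k)^T end.
Definition blkB (b : blk) : 'M[F]_(brows b, bcols b) :=
  match b return 'M[F]_(brows b, bcols b) with
  | BIJ k => Jmx k | BJI k => 1%:M | BLR k => Rmx k | BLRT k => (Rmx k)^T end.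

Fixpoint rowsS (s : seq blk) : nat :=
  match s with [::] => 0%N | b :: s' => (brows b + rowsS s')%N end.
Fixpoint colsS (s : seq blk) : nat :=
  match s with [::] => 0%N | b :: s' => (bcols b + colsS s')%N end.

Fixpoint dsumA (s : seq blk) : 'M[F]_(rowsS s, colsS s) :=
  match s return 'M[F]_(rowsS s, colsS s) with
  | [::] => 0 | b :: s' => block_mx (blkA b) 0 0 (dsumA s') end.
Fixpoint dsumB (s : seq blk) : 'M[F]_(rowsS s, colsS s) :=
  match s return 'M[F]_(rowsS s, colsS s) with
  | [::] => 0 | b :: s' => block_mx (blkB b) 0 0 (dsumB s') end.

(* Equivalence of matrix pairs: S A = A' R, S B = B' R with S, R nonsingular
   (this forces equal sizes, expressed by the equations em, en). *)
Definition pair_equiv m n m' n' (A B : 'M[F]_(m, n)) (A' B' : 'M[F]_(m', n')) :=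
  exists (em : m' = m) (en : n' = n), exists (S : 'M[F]_m) (R : 'M[F]_n),
    [/\ S \in unitmx, R \in unitmx,
        S *m A = castmx (em, en) A' *m R & S *m B = castmx (em, en) B' *m R].

Definition regdec m n (A B : 'M[F]_(m, n)) (r : nat) (D : 'M[F]_r) (s : seq blk) :=
  [/\ D \in unitmx, all (fun b => 0 < blk_size b)%N s &
      pair_equiv A B (block_mx (1%:M : 'M[F]_r) 0 0 (dsumA s))
                     (block_mx D 0 0 (dsumB s))].

End Blocks.

Definition step_blk (b : blk) : seq blk :=
  match b with
  | BLRT 1 => [::]
  | BIJ 1 => [::]
  | BLRT k => [:: BLRT k.-1]
  | BIJ k => [:: BIJ k.-1]
  | b => [:: b]
  end.
Definition step_blks (s : seq blk) : seq blk := flatten (map step_blk s).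

Definition is_LT1 (b : blk) : bool := if b is BLRT 1 then true else false.
Definition is_IJ1 (b : blk) : bool := if b is BIJ 1 then true else false.

(* Main.v *)
Require Import Defs.
From HB Require Import structures.
From mathcomp Require Import all_boot all_order all_algebra.
From mathcomp Require Import zify.
Set Implicit Arguments. Unset Strict Implicit. Unset Printing Implicit Defensive.
Import Order.TTheory GRing.Theory Num.Theory.
Local Open Scope ring_scope.

Section Helpers.
Variable F : fieldType.

Lemma sum_delta n (b : nat) (f : nat -> F) :
  \sum_(l < n) (((l : nat) == b)%:R * f (l : nat)) = if (b < n)%N then f b else 0.
Proof.
case: ifP => hb.
  rewrite (bigD1 (Ordinal hb)) //= eqxx mul1r big1 ?addr0 //= => l hl.
  idtac.
  suff -> : ((l : nat) == b) = false by rewrite mul0r.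
  apply/negbTE; apply: contra hl => /eqP e; apply/eqP; exact: val_inj.
rewrite big1 // => l _.
suff -> : ((l : nat) == b) = false by rewrite mul0r.
by apply/negbTE; apply/eqP => e; move: (ltn_ord l); rewrite e hb.
Qed.

Lemma E1 k : Jmx F k = (Rmx F k)^T *m Lmx F k.
Proof.
apply/matrixP => i j; rewrite !mxE.
under eq_bigr => l _ do rewrite !mxE mulrC.
have h := sum_delta k.-1 j (fun l => (l.+1 == i)%:R); cbv beta in h; rewrite h.
rewrite eq_sym; case: ifP => hj; first by [].
case: eqP => // e; move: (ltn_ord i) (ltn_ord j) hj; rewrite e; lia.
Qed.

Lemma E2 k : Lmx F k *m (Lmx F k)^T = 1%:M.
Proof.
apply/matrixP => i j; rewrite !mxE.
under eq_bigr => l _ do rewrite !mxE (eq_sym (i : nat)) (eq_sym (j : nat)) mulrC.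
have h := sum_delta k j (fun l => (l == i)%:R); cbv beta in h; rewrite h.
have -> : (j < k)%N by move: (ltn_ord j); lia.
by rewrite (eq_sym (j : nat)).
Qed.

Lemma E3 k : Rmx F k *m (Rmx F k)^T = 1%:M.
Proof.
apply/matrixP => i j; rewrite !mxE.
under eq_bigr => l _ do rewrite !mxE (eq_sym (i : nat).+1) (eq_sym (j : nat).+1) mulrC.
have h := sum_delta k j.+1 (fun l => (l == i.+1)%:R); cbv beta in h; rewrite h.
have -> : (j.+1 < k)%N by move: (ltn_ord j); lia.
by rewrite eqSS (eq_sym (j : nat)).
Qed.

Lemma E5 k : Lmx F k *m (Rmx F k)^T = Jmx F k.-1.
Proof.
apply/matrixP => i j; rewrite !mxE.
under eq_bigr => l _ do rewrite !mxE (eq_sym (j : nat).+1) mulrC.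
have h := sum_delta k j.+1 (fun l => ((i : nat) == l)%:R); cbv beta in h; rewrite h.
have -> : (j.+1 < k)%N by move: (ltn_ord j); lia.
by rewrite eq_sym.
Qed.

Lemma E6 k : Rmx F k.-1 *m Lmx F k = Lmx F k.-1 *m Rmx F k.
Proof.
apply/matrixP => i j; rewrite !mxE.
under eq_bigr => l _ do rewrite !mxE (eq_sym (i : nat).+1) .
under [RHS]eq_bigr => l _ do rewrite !mxE (eq_sym (i : nat)).
have h := sum_delta k.-1 i.+1 (fun l => (l == j)%:R); cbv beta in h; rewrite h.
have h2 := sum_delta k.-1 i (fun l => (l.+1 == j)%:R); cbv beta in h2; rewrite h2.
have -> : (i.+1 < k.-1)%N by move: (ltn_ord i); lia.
have -> : (i < k.-1)%N by move: (ltn_ord i); lia.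
by rewrite eq_sym.
Qed.

Definition Good m n m2 n2 (A B : 'M[F]_(m,n)) (A2 B2 : 'M[F]_(m2,n2)) :=
 exists (P : 'M[F]_(n,n2)) (Q : 'M[F]_(m,m2)),
  [/\ A *m P = Q *m A2, B *m P = Q *m B2,
      (forall c : 'cV_n2, P *m c = 0 -> c = 0) /\ (forall c : 'cV_m2, Q *m c = 0 -> c = 0),
      (forall x : 'cV_n, (exists z : 'cV_n, A *m x = B *m z) <-> exists c : 'cV_n2, x = P *m c) &
      (forall y : 'cV_m, (exists z : 'cV_n, y = B *m z) <-> exists c : 'cV_m2, y = Q *m c)].

Lemma Good_surj m n (A B : 'M[F]_(m,n)) (Z : 'M[F]_(n,m)) :
  B *m Z = 1%:M -> Good A B A B.
Proof.
move=> hZ; exists 1%:M, 1%:M; split; rewrite ?mulmx1 ?mul1mx //.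
- by split=> c; rewrite mul1mx.
- move=> x; split=> _; first by exists x; rewrite mul1mx.
  by exists (Z *m (A *m x)); rewrite mulmxA hZ mul1mx.
- move=> y; split=> _; first by exists y; rewrite mul1mx.
  by exists (Z *m y); rewrite mulmxA hZ mul1mx.
Qed.

Lemma mulbd m1 m2 n1 n2 p (X : 'M[F]_(m1,n1)) (Y : 'M[F]_(m2,n2)) (u : 'M_(n1,p)) (v : 'M_(n2,p)) :
  block_mx X 0 0 Y *m col_mx u v = col_mx (X *m u) (Y *m v).
Proof. by rewrite mul_block_col !mul0mx addr0 add0r. Qed.

Lemma Good_block m1 n1 p1 q1 m2 n2 p2 q2
  (A B : 'M[F]_(m1,n1)) (A2 B2 : 'M[F]_(p1,q1))
  (C D : 'M[F]_(m2,n2)) (C2 D2 : 'M[F]_(p2,q2)) :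
  Good A B A2 B2 -> Good C D C2 D2 ->
  Good (block_mx A 0 0 C) (block_mx B 0 0 D) (block_mx A2 0 0 C2) (block_mx B2 0 0 D2).
Proof.
move=> [P [Q [h1 h2 [h3 h4] h5 h6]]] [P' [Q' [h1' h2' [h3' h4'] h5' h6']]].
exists (block_mx P 0 0 P'), (block_mx Q 0 0 Q'); split.
- by rewrite !mulmx_block !mulmx0 !mul0mx !addr0 !add0r h1 h1'.
- by rewrite !mulmx_block !mulmx0 !mul0mx !addr0 !add0r h2 h2'.
- split=> c; rewrite -[c]vsubmxK mulbd => /eqP; rewrite col_mx_eq0 => /andP[/eqP e1 /eqP e2].
    by rewrite (h3 _ e1) (h3' _ e2) col_mx0.
  by rewrite (h4 _ e1) (h4' _ e2) col_mx0.
- move=> x; rewrite -[x]vsubmxK; split.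
    move=> [z]; rewrite -[z]vsubmxK !mulbd => /eq_col_mx [e1 e2].
    have [c1 ->] := (h5 _).1 (ex_intro _ _ e1).
    have [c2 ->] := (h5' _).1 (ex_intro _ _ e2).
    by exists (col_mx c1 c2); rewrite mulbd.
  move=> [c]; rewrite -[c]vsubmxK mulbd => /eq_col_mx [f1 f2].
  have [z1 e1] := (h5 _).2 (ex_intro _ _ f1).
  have [z2 e2] := (h5' _).2 (ex_intro _ _ f2).
  by exists (col_mx z1 z2); rewrite !mulbd e1 e2.
- move=> y; rewrite -[y]vsubmxK; split.
    move=> [z]; rewrite -[z]vsubmxK !mulbd => /eq_col_mx [e1 e2].
    have [c1 ->] := (h6 _).1 (ex_intro _ _ e1).
    have [c2 ->] := (h6' _).1 (ex_intro _ _ e2).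
    by exists (col_mx c1 c2); rewrite mulbd.
  move=> [c]; rewrite -[c]vsubmxK mulbd => /eq_col_mx [f1 f2].
  have [z1 e1] := (h6 _).2 (ex_intro _ _ f1).
  have [z2 e2] := (h6' _).2 (ex_intro _ _ f2).
  by exists (col_mx z1 z2); rewrite !mulbd -e1 -e2.
Qed.

Lemma Good_del m1 n1 m2 n2 p2 q2
  (A B : 'M[F]_(m1,n1)) (A2 B2 : 'M[F]_(0,0))
  (C D : 'M[F]_(m2,n2)) (C2 D2 : 'M[F]_(p2,q2)) :
  Good A B A2 B2 -> Good C D C2 D2 ->
  Good (block_mx A 0 0 C) (block_mx B 0 0 D) C2 D2.
Proof.
move=> [P [Q [h1 h2 [h3 h4] h5 h6]]] [P' [Q' [h1' h2' [h3' h4'] h5' h6']]].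
have P0 : P = 0 by apply: thinmx0.
have Q0 : Q = 0 by apply: thinmx0.
exists (col_mx 0 P'), (col_mx 0 Q'); split.
- by rewrite mul_block_col mul_col_mx !mulmx0 !mul0mx !addr0 add0r h1'.
- by rewrite mul_block_col mul_col_mx !mulmx0 !mul0mx !addr0 add0r h2'.
- split=> c; rewrite mul_col_mx mul0mx => /eqP; rewrite col_mx_eq0 => /andP[_ /eqP e2].
    exact: h3' e2.
  exact: h4' e2.
- move=> x; rewrite -[x]vsubmxK; split.
    move=> [z]; rewrite -[z]vsubmxK !mulbd => /eq_col_mx [e1 e2].
    have [c1 ->] := (h5 _).1 (ex_intro _ _ e1).
    have [c2 ->] := (h5' _).1 (ex_intro _ _ e2).
    by exists c2; rewrite mul_col_mx P0 !mul0mx.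
  move=> [c]; rewrite mul_col_mx mul0mx => /eq_col_mx [f1 f2].
  have [z2 e2] := (h5' _).2 (ex_intro _ _ f2).
  by exists (col_mx 0 z2); rewrite !mulbd e2 f1 !mulmx0.
- move=> y; rewrite -[y]vsubmxK; split.
    move=> [z]; rewrite -[z]vsubmxK !mulbd => /eq_col_mx [e1 e2].
    have [c1 ->] := (h6 _).1 (ex_intro _ _ e1).
    have [c2 ->] := (h6' _).1 (ex_intro _ _ e2).
    by exists c2; rewrite mul_col_mx Q0 !mul0mx.
  move=> [c]; rewrite mul_col_mx mul0mx => /eq_col_mx [f1 f2].
  have [z2 e2] := (h6' _).2 (ex_intro _ _ f2).
  by exists (col_mx 0 z2); rewrite !mulbd -e2 f1 !mulmx0.
Qed.

Lemma Good_IJ k : Good (1%:M : 'M[F]_k) (Jmx F k) (1%:M : 'M[F]_k.-1) (Jmx F k.-1).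
Proof.
have hRR := E3 k; have hLL := E2 k.
have hJR : Jmx F k *m (Rmx F k)^T = (Rmx F k)^T *m Jmx F k.-1.
  by rewrite E1 -mulmxA E5.
have inj : forall c : 'cV_(k.-1), (Rmx F k)^T *m c = 0 -> c = 0.
  by move=> c e; rewrite -[c]mul1mx -hRR -mulmxA e mulmx0.
exists (Rmx F k)^T, (Rmx F k)^T; split => //.
- by rewrite mul1mx mulmx1.
- move=> x; rewrite mul1mx; split.
    by move=> [z ->]; rewrite E1 -mulmxA; eexists.
  move=> [c ->]; exists ((Lmx F k)^T *m c).
  by rewrite E1 mulmxA -(mulmxA _ (Lmx F k)) hLL mulmx1.
- move=> y; split.
    by move=> [z ->]; rewrite E1 -mulmxA; eexists.
  move=> [c ->]; exists ((Lmx F k)^T *m c).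
  by rewrite E1 mulmxA -(mulmxA _ (Lmx F k)) hLL mulmx1.
Qed.

Lemma Good_LRT k : Good (Lmx F k)^T (Rmx F k)^T (Lmx F k.-1)^T (Rmx F k.-1)^T.
Proof.
have hAP : (Lmx F k)^T *m (Rmx F k.-1)^T = (Rmx F k)^T *m (Lmx F k.-1)^T.
  by rewrite -!trmx_mul E6.
exists (Rmx F k.-1)^T, (Rmx F k)^T; split => //.
- split=> c e.
    by rewrite -[c]mul1mx -(E3 k.-1) -mulmxA e mulmx0.
  by rewrite -[c]mul1mx -(E3 k) -mulmxA e mulmx0.
- move=> x; split.
    move=> [z e]; exists (Lmx F k.-1 *m z).
    by rewrite mulmxA -E1 -E5 -mulmxA -e mulmxA E2 mul1mx.
  move=> [c ->]; exists ((Lmx F k.-1)^T *m c).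
  by rewrite !mulmxA hAP.
Qed.

Lemma step_cons b s : step_blks (b :: s) = step_blk b ++ step_blks s.
Proof. by []. Qed.

Lemma Good_dsum s :
  Good (dsumA F s) (dsumB F s) (dsumA F (step_blks s)) (dsumB F (step_blks s)).
Proof.
elim: s => [|b s IH].
  by apply: (@Good_surj _ _ _ _ 0); apply/matrixP => -[] [].
rewrite step_cons.
case: b => [k|k|k|k].
- case: k => [|[|k]].
  + exact: Good_block (Good_IJ 0) IH.
  + exact: Good_del (Good_IJ 1) IH.
  + exact: Good_block (Good_IJ k.+2) IH.
- exact: Good_block (@Good_surj _ _ (Jmx F k) 1%:M 1%:M (mulmx1 _)) IH.
- have hR : Rmx F k *m (Rmx F k)^T = 1%:M by exact: E3.
  exact: Good_block (Good_surj (Lmx F k) hR) IH.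
- case: k => [|[|k]].
  + exact: Good_block (Good_LRT 0) IH.
  + exact: Good_del (Good_LRT 1) IH.
  + exact: Good_block (Good_LRT k.+2) IH.
Qed.

Lemma col_eqmx m n (M N : 'M[F]_(m,n)) : (forall j, col j M = col j N) -> M = N.
Proof.
move=> h; apply/matrixP => i j.
by have := congr1 (fun A : 'M_(m,1) => A i 0) (h j); rewrite !mxE.
Qed.

Lemma mx_inj m b p (X : 'M[F]_(m,b)) (M N : 'M[F]_(b,p)) :
  (forall c : 'cV_b, X *m c = 0 -> c = 0) -> X *m M = X *m N -> M = N.
Proof.
move=> h e; apply: col_eqmx => j; apply/eqP; rewrite -subr_eq0; apply/eqP/h.
by rewrite !colE mulmxBr !mulmxA e subrr.
Qed.

Lemma span_mat n a b (X : 'M[F]_(n,a)) (Y : 'M[F]_(n,b)) :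
  (forall x : 'cV_n, (exists c : 'cV_a, x = X *m c) -> exists c : 'cV_b, x = Y *m c) ->
  exists T : 'M_(b,a), X = Y *m T.
Proof.
move=> h.
have : forall j : 'I_a, exists c : 'cV_b, col j X = Y *m c.
  by move=> j; apply: h; exists (delta_mx j 0); rewrite colE.
case/fin_all_exists => f hf.
exists (\matrix_(i, j) f j i 0); apply: col_eqmx => j.
rewrite hf colE -mulmxA -colE; congr (_ *m _).
by apply/matrixP => i z; rewrite !mxE ord1.
Qed.

Lemma basis_change n a b (X : 'M[F]_(n,a)) (Y : 'M[F]_(n,b)) :
  (forall c : 'cV_a, X *m c = 0 -> c = 0) ->
  (forall c : 'cV_b, Y *m c = 0 -> c = 0) ->
  (forall x : 'cV_n, (exists c : 'cV_a, x = X *m c) <-> exists c : 'cV_b, x = Y *m c) ->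
  exists (T1 : 'M_(b,a)) (T2 : 'M_(a,b)),
    [/\ X = Y *m T1, T2 *m T1 = 1%:M & T1 *m T2 = 1%:M].
Proof.
move=> iX iY h.
have [T1 e1] := span_mat (fun x => (h x).1).
have [T2 e2] := span_mat (fun x => (h x).2).
exists T1, T2; split => //.
  by apply: (mx_inj iX); rewrite mulmx1 mulmxA -e2 -e1.
by apply: (mx_inj iY); rewrite mulmx1 mulmxA -e1 -e2.
Qed.

Lemma dim_eq a b (T1 : 'M[F]_(b,a)) (T2 : 'M[F]_(a,b)) :
  T2 *m T1 = 1%:M -> T1 *m T2 = 1%:M -> a = b.
Proof.
move=> e1 e2; apply/eqP; rewrite eqn_leq; apply/andP; split.
  by rewrite -{1}(mxrank1 F a) -e1 (leq_trans (mxrankM_maxl _ _)) ?rank_leq_col.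
by rewrite -{1}(mxrank1 F b) -e2 (leq_trans (mxrankM_maxl _ _)) ?rank_leq_col.
Qed.

Lemma rank_basis m n b (B : 'M[F]_(m,n)) (Y : 'M[F]_(m,b)) :
  (forall c : 'cV_b, Y *m c = 0 -> c = 0) ->
  (forall y : 'cV_m, (exists z : 'cV_n, y = B *m z) <-> exists c : 'cV_b, y = Y *m c) ->
  \rank B = b.
Proof.
move=> iY h.
have [T1 e1] := @span_mat _ _ _ B Y (fun x hx => (h x).1 (let: ex_intro c e := hx in ex_intro _ c e)).
have [T2 e2] := @span_mat _ _ _ Y B (fun x hx => (h x).2 hx).
have rY : \rank Y = b.
  rewrite -mxrank_tr; apply/eqP; apply: inj_row_free => v e.
  have := iY v^T; rewrite -[Y]trmxK -trmx_mul e trmx0 => /(_ erefl) /(congr1 trmx).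
  by rewrite trmxK trmx0.
apply/eqP; rewrite eqn_leq; apply/andP; split.
  by rewrite -rY e1 mxrankM_maxl.
by rewrite -rY e2 mxrankM_maxl.
Qed.

Lemma rank_equiv m n (W : 'M[F]_m) (T : 'M[F]_n) (X Y : 'M[F]_(m,n)) :
  W \in unitmx -> T \in unitmx -> W *m X = Y *m T -> \rank X = \rank Y.
Proof.
move=> Wu Tu e.
have -> : \rank Y = \rank (Y *m T) by rewrite mxrankMfree // row_free_unit.
rewrite -e; apply/eqP; rewrite eqn_leq mxrankM_maxr andbT.
by rewrite -{1}(mulKmx Wu X) mxrankM_maxr.
Qed.

End Helpers.

Lemma rowsS_cat (s1 s2 : seq blk) : rowsS (s1 ++ s2) = (rowsS s1 + rowsS s2)%N.
Proof. by elim: s1 => //= b s1 ->; rewrite addnA. Qed.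
Lemma colsS_cat (s1 s2 : seq blk) : colsS (s1 ++ s2) = (colsS s1 + colsS s2)%N.
Proof. by elim: s1 => //= b s1 ->; rewrite addnA. Qed.
Lemma step_cat (s1 s2 : seq blk) : step_blks (s1 ++ s2) = step_blks s1 ++ step_blks s2.
Proof. by rewrite /step_blks map_cat flatten_cat. Qed.

Lemma cnt1 s : (count is_LT1 s + rowsS (step_blks s) + colsS s = rowsS s + colsS (step_blks s))%N.
Proof.
elim: s => //= b s IH; rewrite step_cons rowsS_cat colsS_cat.
case: b => [[|[|k]]|k|k|[|[|k]]] /=; lia.
Qed.

Lemma cnt2 s : (count is_IJ1 s + colsS (step_blks s) + rowsS (step_blks s)
   = colsS s + rowsS (step_blks (step_blks s)))%N.
Proof.
elim: s => //= b s IH; rewrite step_cons step_cat !rowsS_cat !colsS_cat.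
case: b => [[|[|[|k]]]|k|k|[|[|[|k]]]] /=; lia.
Qed.

Lemma pos_step s : all (fun b => 0 < blk_size b)%N s ->
  all (fun b => 0 < blk_size b)%N (step_blks s).
Proof.
elim: s => //= b s IH /andP[hb hs]; rewrite step_cons all_cat IH // andbT.
case: b hb => [k|k|k|k] hb //; case: k hb => [|[|k]] hb //.
Qed.

Unset Implicit Arguments.

Theorem lemma1 (F : fieldType) (m n : nat) (A1 B1 : 'M[F]_(m, n))
  (u2 v2 : nat) (P : 'M[F]_(n, u2)) (Q : 'M[F]_(m, v2))
  (A2 B2 : 'M[F]_(v2, u2))
  (P_indep : forall c : 'cV[F]_u2, P *m c = 0 -> c = 0)
  (P_span : forall x : 'cV[F]_n,
      (exists z : 'cV[F]_n, A1 *m x = B1 *m z) <-> (exists c : 'cV[F]_u2, x = P *m c))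
  (Q_indep : forall c : 'cV[F]_v2, Q *m c = 0 -> c = 0)
  (Q_span : forall y : 'cV[F]_m,
      (exists z : 'cV[F]_n, y = B1 *m z) <-> (exists c : 'cV[F]_v2, y = Q *m c))
  (hA2 : Q *m A2 = A1 *m P) (hB2 : Q *m B2 = B1 *m P)
  (r : nat) (D : 'M[F]_r) (s : seq blk) :
  regdec A1 B1 D s ->
  [/\ regdec A2 B2 D (step_blks s),
      (count is_LT1 s)%:Z = ((m%:Z - v2%:Z) - (n%:Z - u2%:Z))%R &
      (count is_IJ1 s)%:Z = ((n%:Z - u2%:Z) - (v2%:Z - (\rank B2)%:Z))%R].
Proof.
move=> [Du Dpos [em [en [S [R [Su Ru hA hB]]]]]].
subst m n; rewrite !castmx_id in hA hB.
set s' := step_blks s.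
have GR : forall t : seq blk, Good (block_mx (1%:M : 'M[F]_r) 0 0 (dsumA F t)) (block_mx D 0 0 (dsumB F t))
     (block_mx (1%:M : 'M[F]_r) 0 0 (dsumA F (step_blks t))) (block_mx D 0 0 (dsumB F (step_blks t))).
  by move=> t; apply: Good_block (Good_dsum F t); apply: (Good_surj _ (mulmxV Du)).
have [P' [Q' [g1 g2 [g3 g4] g5 g6]]] := GR s.
set A' := block_mx _ _ _ (dsumA F s) in hA g1 g5.
set B' := block_mx _ _ _ (dsumB F s) in hB g2 g5 g6.
have spanP : forall x : 'cV_(r + colsS s), (exists c : 'cV_u2, x = P *m c) <-> (exists c, x = (invmx R *m P') *m c).
  move=> x; rewrite -P_span; split.
    move=> [z e].
    have e' : A' *m (R *m x) = B' *m (R *m z) by rewrite !mulmxA -hA -hB -!mulmxA e.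
    have [c ec] := (g5 (R *m x)).1 (ex_intro _ (R *m z) e').
    by exists c; rewrite -mulmxA -ec mulKmx.
  move=> [c ->]; have [z ez] := (g5 (P' *m c)).2 (ex_intro _ c erefl).
  exists (invmx R *m z); apply: (can_inj (mulKmx Su)).
  have key : S *m B1 *m invmx R = B' by rewrite hB -mulmxA mulmxV // mulmx1.
  by rewrite !mulmxA key hA -(mulmxA A') mulmxV // mulmx1 -mulmxA.
have spanQ : forall y : 'cV_(r + rowsS s), (exists c : 'cV_v2, y = Q *m c) <-> (exists c, y = (invmx S *m Q') *m c).
  move=> y; rewrite -Q_span; split.
    move=> [z e].
    have e' : S *m y = B' *m (R *m z) by rewrite e mulmxA hB mulmxA.
    have [c ec] := (g6 (S *m y)).1 (ex_intro _ (R *m z) e').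
    by exists c; rewrite -mulmxA -ec mulKmx.
  move=> [c ->]; have [z ez] := (g6 (Q' *m c)).2 (ex_intro _ c erefl).
  exists (invmx R *m z); apply: (can_inj (mulKmx Su)).
  have key : S *m B1 *m invmx R = B' by rewrite hB -mulmxA mulmxV // mulmx1.
  by rewrite !mulmxA key mulmxV // mul1mx.
have iP : forall c : 'cV_(r + colsS s'), (invmx R *m P') *m c = 0 -> c = 0.
  by move=> c e; apply: g3; rewrite -(mulKVmx Ru (P' *m c)) (mulmxA (invmx R)) e mulmx0.
have iQ : forall c : 'cV_(r + rowsS s'), (invmx S *m Q') *m c = 0 -> c = 0.
  by move=> c e; apply: g4; rewrite -(mulKVmx Su (Q' *m c)) (mulmxA (invmx S)) e mulmx0.
have [T1 [T2 [eP t21 t12]]] := basis_change P_indep iP spanP.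
have [W1 [W2 [eQ w21 w12]]] := basis_change Q_indep iQ spanQ.
have eu := dim_eq t21 t12; have ev := dim_eq w21 w12.
subst u2 v2.
have T1u := (mulmx1_unit t12).1.
have W1u := (mulmx1_unit w12).1.
have SQ : S *m Q = Q' *m W1 by rewrite eQ !mulmxA mulmxV // mul1mx.
have RP : R *m P = P' *m T1 by rewrite eP !mulmxA mulmxV // mul1mx.
have eA : W1 *m A2 = block_mx (1%:M : 'M[F]_r) 0 0 (dsumA F s') *m T1.
  apply: (mx_inj g4); rewrite mulmxA -SQ -mulmxA hA2 mulmxA hA -mulmxA RP.
  by rewrite !mulmxA g1.
have eB : W1 *m B2 = block_mx D 0 0 (dsumB F s') *m T1.
  apply: (mx_inj g4); rewrite mulmxA -SQ -mulmxA hB2 mulmxA hB -mulmxA RP.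
  by rewrite !mulmxA g2.
split.
- split => //; first exact: pos_step.
  by exists erefl, erefl, W1, T1; rewrite !castmx_id.
- have := cnt1 s; rewrite -/s' => h.
  apply/eqP; rewrite -subr_eq0; apply/eqP.
  rewrite !PoszD. lia.
- have [P'' [Q'' [_ _ [_ q4] _ q6]]] := GR s'.
  rewrite (rank_equiv W1u T1u eB) (rank_basis q4 q6).
  have := cnt2 s; rewrite -/s' => h.
  rewrite !PoszD. lia.
Qed.
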